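(* Let $m\ge 1$ and let $A$ be a $2m\times 2$ binary-block matrix. Then $$\operatorname{M}(AD_m(\operatorname{wt}_A)) = 2^{t}\,\operatorname{M}(AD_{m-1}(\operatorname{wt}_{\operatorname{sh}(A)})),$$ where $t$ is the number of blocks of $A$ equal to $\begin{bmatrix}1&1\\1&1\end{bmatrix}$ (i.e. the number of $0$ terms in $\operatorname{code}(A)$).
   Context: The Aztec diamond graph $AD_n$ is the planar dual graph of the Aztec diamond region of order $n$ (the union of unit squares inside $|x|+|y|=n+1$), rotated by $45^\circ$; it consists of $n$ rows and $n$ columns of 4-cycles called d-cells. The centers of the edges of $AD_n$ form a $2n\times 2n$ array, where the four edges of the d-cell in row $i$, column $j$ occupy rows $2i-1,2i$ and columns $2j-1,2j$ of the array (placed according to their position around the d-cell). A weighted $AD_n$ is given by a $2n\times 2n$ weight matrix whose entries are the edge weights. $\operatorname{M}(G)$ for a weighted graph is the sum over perfect matchings of the product of the weights of their edges; $\operatorname{M}(AD_0)=1$. For a $k\times l$ matrix $A$ with $k,l$ even, $AD_n(\operatorname{wt}_A)$ denotes $AD_n$ whose weight matrix is obtained by placing $A$ in the upper-left corner of the $2n\times 2n$ array and filling the rest periodically (translating $A$ by $l$ columns to the right and $k$ rows down; partial copies allowed at the edges). A $2m\times 2$ matrix $M$ with $2\times 2$ blocks $M_1,\dots,M_m$ (stacked vertically) is a binary-block matrix if each $M_i$ is one of $\begin{bmatrix}1&1\\1&1\end{bmatrix}$, $\begin{bmatrix}1&1\\1&0\end{bmatrix}$, $\begin{bmatrix}0&1\\1&1\end{bmatrix}$,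 $\begin{bmatrix}0&1\\1&0\end{bmatrix}$; its encoded sequence $\operatorname{code}(M)=(s_1,\dots,s_m)$ has $s_i=0,+,-,\pm$ respectively. The operator $\operatorname{sh}$: $\operatorname{sh}(M)$ is the binary-block matrix whose encoded sequence is obtained from $\operatorname{code}(M)$ as follows (a $\pm$ is regarded as a $+$ and a $-$ at the same position): delete all $0$ terms, leaving those positions empty; simultaneously move every $+$ one position to the left cyclically (a $+$ at position $1$ goes to position $m$), leaving its old position empty if nothing else is there; positions $-$ stay fixed; a position holding both a $+$ and a $-$ becomes $\pm$; finally fill all empty positions with $0$. *)

(* Defs.v *)
From HB Require Import structures.
From mathcomp Require Import all_boot all_order all_algebra.
Set Implicit Arguments. Unset Strict Implicit. Unset Printing Implicit Defensive.

(* ---------- The Aztec diamond graph AD_n ----------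
   d-cell (i,j), 0 <= i,j < n (row i, column j).  After the 45 degree rotation
   the d-cell is a 4-cycle with vertices N, E, S, W.  Adjacent d-cells share
   vertices: E of (i,j) = W of (i,j+1), S of (i,j) = N of (i+1,j).
   Vertices:
     "vertical" vertices  (true,  k, c) with k : 'I_(n+1), c : 'I_n :
          the N vertex of cell (k,c) / S vertex of cell (k-1,c);
     "horizontal" vertices (false, k, r) with k : 'I_(n+1), r : 'I_n :
          the W vertex of cell (r,k) / E vertex of cell (r,k-1).
   Edges: (i, j, a, b) = edge of d-cell (i,j) joining the N (a=false) or
   S (a=true) vertex with the W (b=false) or E (b=true) vertex; it sits in
   row 2i+a, column 2j+b (0-indexed) of the 2n x 2n edge array, i.e.
   NW edge top-left, NE top-right, SW bottom-left, SE bottom-right. *)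

Definition ad_edge (n : nat) := ('I_n * 'I_n * bool * bool)%type.
Definition ad_vertex (n : nat) := (bool * 'I_n.+1 * 'I_n)%type.

Definition e_row n (e : ad_edge n) : nat := let: (i, j, a, b) := e in (i.*2 + a)%N.
Definition e_col n (e : ad_edge n) : nat := let: (i, j, a, b) := e in (j.*2 + b)%N.

Definition e_vert n (e : ad_edge n) : ad_vertex n :=
  let: (i, j, a, b) := e in (true, inord (i + a), j).
Definition e_horz n (e : ad_edge n) : ad_vertex n :=
  let: (i, j, a, b) := e in (false, inord (j + b), i).

Definition incident n (e : ad_edge n) (v : ad_vertex n) : bool :=
  (v == e_vert e) || (v == e_horz e).

Definition perfect_matching n (S : {set ad_edge n}) : bool :=
  [forall v : ad_vertex n, #|[set e in S | incident e v]| == 1].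

Definition Mw (n : nat) (W : nat -> nat -> nat) : nat :=
  \sum_(S : {set ad_edge n} | perfect_matching S) \prod_(e in S) W (e_row e) (e_col e).

Definition wt k l (A : 'M[nat]_(k, l)) (r c : nat) : nat :=
  match (insub (r %% k) : option 'I_k), (insub (c %% l) : option 'I_l) with
  | Some i, Some j => A i j
  | _, _ => 0%N
  end.

Inductive bsign := sZero | sPlus | sMinus | sPM.

Definition sign_entry (s : bsign) (a b : nat) : nat :=
  match s, a, b with
  | sZero, _, _ => 1
  | sPlus, 1, 1 => 0
  | sPlus, _, _ => 1
  | sMinus, 0, 0 => 0
  | sMinus, _, _ => 1
  | sPM, 0, 0 => 0
  | sPM, 1, 1 => 0
  | sPM, _, _ => 1
  end.

Definition bbmat (m : nat) (s : seq bsign) : 'M[nat]_(m.*2, 2) :=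
  \matrix_(r < m.*2, c < 2) sign_entry (nth sZero s r./2) (odd r) c.

Definition is_binary_block (m : nat) (A : 'M[nat]_(m.*2, 2)) : Prop :=
  exists s : seq bsign, size s = m /\ A = bbmat m s.

Definition decode_block (a00 a01 a10 a11 : nat) : bsign :=
  match a00, a01, a10, a11 with
  | 1, 1, 1, 1 => sZero
  | 1, 1, 1, 0 => sPlus
  | 0, 1, 1, 1 => sMinus
  | _, _, _, _ => sPM
  end.

Definition code (m : nat) (A : 'M[nat]_(m.*2, 2)) : seq bsign :=
  [seq decode_block (wt A i.*2 0) (wt A i.*2 1) (wt A i.*2.+1 0) (wt A i.*2.+1 1)
  | i <- iota 0 m].

Definition has_plus (s : bsign) : bool :=
  match s with sPlus | sPM => true | _ => false end.
Definition has_minus (s : bsign) : bool :=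
  match s with sMinus | sPM => true | _ => false end.
Definition is_zero (s : bsign) : bool :=
  match s with sZero => true | _ => false end.

Definition mk_sign (p q : bool) : bsign :=
  match p, q with
  | true, true => sPM | true, false => sPlus
  | false, true => sMinus | false, false => sZero
  end.

(* the shift on encoded sequences: 0's deleted, every + moves one position
   to the left cyclically (position 1 -> position m), - stays fixed.
   0-indexed: new position p gets a + iff old position (p+1) mod m had one. *)
Definition shift_code (s : seq bsign) : seq bsign :=
  let m := size s in
  [seq mk_sign (has_plus (nth sZero s (p.+1 %% m))) (has_minus (nth sZero s p))
  | p <- iota 0 m].

Definition sh (m : nat) (A : 'M[nat]_(m.*2, 2)) : 'M[nat]_(m.*2, 2) :=
  bbmat m (shift_code (code A)).

(* Main.v *)
Require Import Defs.
From HB Require Import structures.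
From mathcomp Require Import all_boot all_order all_algebra.
From mathcomp Require Import ring zify.
Set Implicit Arguments. Unset Strict Implicit. Unset Printing Implicit Defensive.

Fixpoint wsum (n : nat) (F : seq bool -> nat) : nat :=
  if n is n'.+1 then wsum n' (fun Z => F (false :: Z)) + wsum n' (fun Z => F (true :: Z))
  else F [::].

Lemma eq_wsum n F G : (forall Z, size Z = n -> F Z = G Z) -> wsum n F = wsum n G.
Proof.
elim: n F G => [|n IH] F G H /=; first by rewrite H.
by congr (_ + _); apply: IH => Z hZ; apply: H; rewrite /= hZ.
Qed.

Lemma wsumD n F G : wsum n (fun Z => F Z + G Z) = wsum n F + wsum n G.
Proof.
elim: n F G => [|n IH] F G //=.
rewrite (IH (fun Z => F (false :: Z))) (IH (fun Z => F (true :: Z))). lia.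
Qed.

Lemma wsumM n c F : wsum n (fun Z => c * F Z) = c * wsum n F.
Proof.
elim: n F => [|n IH] F //=.
by rewrite (IH (fun Z => F (false :: Z))) (IH (fun Z => F (true :: Z))) mulnDr.
Qed.

Lemma wsum_swap n m F :
  wsum n (fun X => wsum m (fun Y => F X Y)) = wsum m (fun Y => wsum n (fun X => F X Y)).
Proof.
elim: n F => [|n IH] F //=.
rewrite (IH (fun X Y => F (false :: X) Y)) (IH (fun X Y => F (true :: X) Y)).
by rewrite -wsumD.
Qed.

Lemma wsum_delta n w F : size w = n -> wsum n (fun Z => (Z == w) * F Z) = F w.
Proof.
elim: n w F => [|n IH] [|b w] F //=.
- by move=> _; rewrite ?eqxx mul1n.
- move=> [hw].
  have E: forall c, wsum n (fun Z => (c :: Z == b :: w) * F (c :: Z)) =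
     (c == b) * F (b :: w).
    move=> c; case: (eqVneq c b) => [->|ne].
    + rewrite (eq_wsum (G := fun Z => (Z == w) * F (b :: Z))); last first.
        by move=> Z _; rewrite eqseq_cons eqxx.
      by rewrite (IH w (fun Z => F (b :: Z))) // mul1n.
    + rewrite (eq_wsum (G := fun _ => 0 * 0)); last first.
        by move=> Z _; rewrite eqseq_cons (negPf ne).
      by rewrite wsumM !mul0n.
  rewrite !E; case: b {E} => /=; lia.
Qed.

Definition w6 (a b : nat) (x f y g : bool) : nat :=
  match x, f, y, g with
  | false, false, false, false => 1
  | true, true, true, true => 1
  | false, true, false, true => a
  | true, false, true, false => b
  | false, true, true, false => a * b + 1
  | true, false, false, true => 1
  | _, _, _, _ => 0
  end.
Definition gw (a : nat) (x g z g' : bool) : nat :=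
  match x, g, z, g' with
  | true, false, true, false => 1
  | true, false, false, true => 1
  | false, false, false, false => 1
  | false, true, true, false => a
  | false, true, false, true => a
  | _, _, _, _ => 0
  end.
Definition sw (b : nat) (z h y h' : bool) : nat :=
  match z, h, y, h' with
  | true, true, false, false => 1
  | true, true, true, true => b
  | true, false, true, false => 1
  | false, false, false, false => 1
  | false, false, true, true => b
  | _, _, _, _ => 0
  end.
Arguments w6 : simpl never.
Arguments gw : simpl never.
Arguments sw : simpl never.

Fixpoint RT (w : bool -> bool -> bool -> bool -> nat) (f : bool) (X Y : seq bool) (g : bool) : nat :=
  match X, Y with
  | [::], [::] => f == g
  | x :: X', y :: Y' => w x f y false * RT w false X' Y' g + w x f y true * RT w true X' Y' g
  | _, _ => 0
  end.

Fixpoint RS (w : bool -> bool -> bool -> bool -> nat) (h : bool) (X Z : seq bool) : nat :=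
  match X, Z with
  | x :: X', z :: Z' => w x h z false * RS w false X' Z' + w x h z true * RS w true X' Z'
  | x :: X', [::] => nilp X' && (h == x)
  | [::], _ => 0
  end.

Definition G a X Z := if Z is z0 :: Z' then RT (gw a) (~~ z0) X Z' false else 0.
Definition S b Z Y := RS (sw b) false Z Y.
Definition T a b X Y := RT (w6 a b) true X Y false.

Lemma wsum_prod2 n c1 c2 d1 d2 A1 A2 B1 B2 :
  wsum n (fun Z => (c1 * A1 Z + c2 * A2 Z) * (d1 * B1 Z + d2 * B2 Z)) =
  c1 * d1 * wsum n (fun Z => A1 Z * B1 Z) + c1 * d2 * wsum n (fun Z => A1 Z * B2 Z) +
  c2 * d1 * wsum n (fun Z => A2 Z * B1 Z) + c2 * d2 * wsum n (fun Z => A2 Z * B2 Z).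
Proof.
rewrite -!wsumM -!wsumD; apply: eq_wsum => Z _; ring.
Qed.

Section Core.
Variables a b : nat.

Definition Phi g z h X Y :=
  wsum (size X) (fun Z => RT (gw a) g X Z false * RS (sw b) h (z :: Z) Y).

Lemma Phi_cons g z h x X y Y : Phi g z h (x :: X) (y :: Y) =
  gw a x g false false * sw b z h y false * Phi false false false X Y +
  gw a x g false false * sw b z h y true * Phi false false true X Y +
  gw a x g false true * sw b z h y false * Phi true false false X Y +
  gw a x g false true * sw b z h y true * Phi true false true X Y +
  (gw a x g true false * sw b z h y false * Phi false true false X Y +
  gw a x g true false * sw b z h y true * Phi false true true X Y +
  gw a x g true true * sw b z h y false * Phi true true false X Y +
  gw a x g true true * sw b z h y true * Phi true true true X Y).
Proof. by rewrite /Phi /= !wsum_prod2. Qed.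

Lemma Phi_rel X Y : size X = size Y ->
  [/\ Phi false true false X Y + Phi true false false X Y = RT (w6 a b) true X Y false,
      Phi false true true X Y + Phi true false true X Y = RT (w6 a b) false X Y false,
      Phi false false false X Y = RT (w6 a b) false X Y false &
      Phi false false true X Y = 0].
Proof.
elim: X Y => [|x X IH] [|y Y] //; try by move=> _; rewrite /Phi /=.
move=> /= [hs].
have [RA RB RC RD] := IH Y hs.
rewrite !Phi_cons.
rewrite RC RD -RB -RA.
by case: x; case: y; rewrite /gw /sw /w6; split; ring.
Qed.

Lemma D_lemma X Y : size X = size Y ->
  T a b X Y = wsum (size X).+1 (fun Z => G a X Z * S b Z Y).
Proof.
move=> hs; have [RA _ _ _] := Phi_rel hs.
by rewrite /T -RA addnC.
Qed.

End Core.

Section Core2.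
Variables a b : nat.

Definition Theta h g X Y :=
  wsum (size Y) (fun Z => RS (sw b) h X Z * RT (gw a) g Z Y false).

Lemma Theta_cons h g x X y Y : Theta h g (x :: X) (y :: Y) =
  sw b x h false false * gw a false g y false * Theta false false X Y +
  sw b x h false false * gw a false g y true * Theta false true X Y +
  sw b x h false true * gw a false g y false * Theta true false X Y +
  sw b x h false true * gw a false g y true * Theta true true X Y +
  (sw b x h true false * gw a true g y false * Theta false false X Y +
  sw b x h true false * gw a true g y true * Theta false true X Y +
  sw b x h true true * gw a true g y false * Theta true false X Y +
  sw b x h true true * gw a true g y true * Theta true true X Y).
Proof. by rewrite /Theta /= !wsum_prod2. Qed.

Definition Psi' f y X Y := RT (w6 a b) f X (y :: Y) false.

Lemma Theta_rel X Y : size X = (size Y).+1 ->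
  [/\ (a * b + 1) * Theta false true X Y = Psi' true false X Y,
      (a * b + 1) * Theta false false X Y = Psi' true true X Y,
      Theta false false X Y + b * Theta true true X Y = Psi' false false X Y &
      b * Theta true false X Y = Psi' false true X Y].
Proof.
elim: Y X => [|y Y IH] [|x X] //=.
  case: X => // _; rewrite /Theta /Psi' /=.
  by case: x; rewrite /w6 /=; split; ring.
move=> [hs].
have [Q1 Q2 Q3 Q4] := IH X hs.
rewrite /Psi' in Q1 Q2 Q3 Q4.
rewrite !Theta_cons /Psi' /=.
case: y; rewrite -?Q1 -?Q2 -?Q3 -?Q4;
by case: x; rewrite /gw /sw /w6; split; ring.
Qed.

Lemma C_lemma X Y : size X = size Y -> 0 < size X ->
  T a b X Y = (a * b + 1) * wsum (size X).-1 (fun Z => S b X Z * G a Z Y).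
Proof.
case: Y => [|y0 Y] hs hpos; first by rewrite hs in hpos.
have hs' : size X = (size Y).+1 by rewrite hs.
have [Q1 Q2 _ _] := Theta_rel hs'.
rewrite /Psi' /Theta in Q1 Q2.
rewrite hs' /T /G /S /=.
by case: y0 {hs}; [rewrite -Q2 | rewrite -Q1].
Qed.

End Core2.

Lemma B1_gen b n Z : size Z = n ->
  RS (sw b) false (nseq n.+1 false) Z = (Z == nseq n false) /\
  RS (sw b) true (nseq n.+1 false) Z = 0.
Proof.
elim: n Z => [|n IH] [|z Z] //= [hs].
have [E1 E2] := IH Z hs.
move: E1 E2 => /= -> ->; rewrite eqseq_cons.
by case: z; rewrite /sw /=; split; lia.
Qed.

Lemma B1 b n Z : size Z = n -> S b (nseq n.+1 false) Z = (Z == nseq n false).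
Proof. by move=> hs; case: (B1_gen b hs). Qed.

Lemma B2 a n Z : size Z = n -> G a Z (nseq n.+1 true) = (Z == nseq n true).
Proof.
rewrite /G /=.
elim: n Z => [|n IH] [|z Z] //= [hs].
rewrite IH // eqseq_cons.
by case: z; rewrite /gw /=; lia.
Qed.

Arguments wsum : simpl never.

Definition prodf (rs : seq (nat * nat)) := \prod_(r <- rs) (r.1 * r.2 + 1).

Fixpoint chainT n (rs : seq (nat * nat)) (X : seq bool) : nat :=
  if rs is r :: rs' then wsum n (fun Y => T r.1 r.2 X Y * chainT n rs' Y)
  else (X == nseq n true).

Fixpoint chainSG m (rs : seq (nat * nat)) (X : seq bool) : nat :=
  if rs is r :: rs' then
    wsum m (fun Z => S r.2 X Z * wsum m.+1 (fun Y => G r.1 Z Y * chainSG m rs' Y))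
  else (X == nseq m.+1 true).

Lemma wsumMr n c F : wsum n (fun Z => F Z * c) = wsum n F * c.
Proof. rewrite mulnC -wsumM; apply: eq_wsum => Z _; exact: mulnC. Qed.

Lemma L1 m rs X : size X = m.+1 -> chainT m.+1 rs X = prodf rs * chainSG m rs X.
Proof.
elim: rs X => [|[a b] rs IH] X hX /=; first by rewrite /prodf big_nil mul1n.
rewrite /prodf big_cons -/(prodf rs) /=.
transitivity (wsum m.+1 (fun Y => (a * b + 1) * prodf rs *
   wsum m (fun Z => S b X Z * G a Z Y * chainSG m rs Y))).
  apply: eq_wsum => Y hY.
  rewrite IH // C_lemma ?hX ?hY // /=.
  rewrite -mulnA -mulnA; congr (_ * _).
  rewrite mulnCA; congr (_ * _).
  by rewrite -wsumMr.
rewrite wsumM -!mulnA; do 2 congr (_ * _).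
rewrite wsum_swap; apply: eq_wsum => Z _.
rewrite -wsumM; apply: eq_wsum => Y _; ring.
Qed.

Fixpoint shiftrows (a : nat) (rs : seq (nat * nat)) : seq (nat * nat) :=
  if rs is r :: rs' then (a, r.2) :: shiftrows r.1 rs' else [::].

Lemma L2 m a rs Z : size Z = m ->
  wsum m.+1 (fun Y => G a Z Y * chainSG m rs Y) = chainT m (shiftrows a rs) Z.
Proof.
elim: rs a Z => [|[a' b'] rs IH] a Z hZ /=.
  rewrite (eq_wsum (G := fun Y => (Y == nseq m.+1 true) * G a Z Y)); last by move=> *; exact: mulnC.
  by rewrite wsum_delta ?size_nseq // B2.
transitivity (wsum m (fun Z' => wsum m.+1 (fun Y => G a Z Y * S b' Y Z') *
     wsum m.+1 (fun Y => G a' Z' Y * chainSG m rs Y))).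
  rewrite (eq_wsum (G := fun Y => wsum m (fun Z' => G a Z Y * S b' Y Z' *
      wsum m.+1 (fun Y0 => G a' Z' Y0 * chainSG m rs Y0)))); last first.
    by move=> Y _; rewrite -wsumM; apply: eq_wsum => Z' _; ring.
  rewrite wsum_swap; apply: eq_wsum => Z' _.
  by rewrite -wsumMr.
apply: eq_wsum => Z' hZ'.
by rewrite IH // -hZ D_lemma // hZ hZ'.
Qed.

Lemma chain_main m r rs :
  chainT m.+1 (r :: rs) (nseq m.+1 false) =
  prodf (r :: rs) * chainT m (shiftrows r.1 rs) (nseq m false).
Proof.
rewrite L1 ?size_nseq //; congr (_ * _).
rewrite /=.
rewrite (eq_wsum (G := fun Z => (Z == nseq m false) *
   wsum m.+1 (fun Y => G r.1 Z Y * chainSG m rs Y))); last by move=> Z hZ; rewrite B1.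
by rewrite wsum_delta ?size_nseq // L2 ?size_nseq.
Qed.

Section Br1.
Variable n' : nat.
Local Notation n := n'.+1.

Definition lc := (bool * bool * bool * bool)%type.
Definition bitl (l : lc) (a b : bool) : bool :=
  let: (nw, ne, sw, se) := l in
  match a, b with
  | false, false => nw | false, true => ne | true, false => sw | true, true => se end.

Definition hL (L : {ffun 'I_n * 'I_n -> lc}) : {set ad_edge n} :=
  [set e : ad_edge n | let: (i, j, a, b) := e in bitl (L (i, j)) a b].

Lemma sum4 (F : ad_edge n -> nat) :
  \sum_(e : ad_edge n) F e = \sum_(i : 'I_n) \sum_(j : 'I_n) \sum_(a : bool) \sum_(b : bool) F (i, j, a, b).
Proof.
symmetry; rewrite !pair_bigA /=.
by apply: eq_bigr => [[[[i j] a] b]] _.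
Qed.

Lemma card_inc (S : {set ad_edge n}) v :
  #|[set e in S | incident e v]| = \sum_(e : ad_edge n) ((e \in S) && incident e v).
Proof.
rewrite -sum1_card big_mkcond /=; apply: eq_bigr => e _.
by rewrite inE; case: (_ && _).
Qed.

Lemma sum_pick (G : 'I_n -> nat) (p : nat) :
  \sum_(i : 'I_n) (p == i) * G i = if p < n then G (inord p) else 0.
Proof.
case: ltnP => hp.
- rewrite (bigD1 (inord p)) //= inordK // eqxx mul1n big1 ?addn0 //.
  move=> i hi; case: (eqVneq p i) => [e|]; last by rewrite mul0n.
  have ei : inord i = i by apply: val_inj; rewrite /= inordK.
  by move: hi; rewrite e ei eqxx.
- rewrite big1 // => i _.
  have: p != i by apply/eqP => e; move: (ltn_ord i); rewrite -e ltnNge hp.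
  by move/negPf ->.
Qed.

Lemma pick_ord (c : 'I_n) (H : 'I_n -> nat) : \sum_(j : 'I_n) (c == j) * H j = H c.
Proof.
rewrite (bigD1 c) //= eqxx mul1n big1 ?addn0 // => j hj.
by rewrite eq_sym (negPf hj).
Qed.

Lemma sum_pick1 (k : 'I_n.+1) (B : 'I_n -> nat) :
  \sum_(i : 'I_n) (k == i + 1 :> nat) * B i =
  (if 0 < k then B (inord k.-1) else 0).
Proof.
have hk := ltn_ord k.
transitivity (\sum_(i : 'I_n) (0 < k) * ((k.-1 == i) * B i)).
  apply: eq_bigr => i _; have [k0|kp] := posnP k.
    by rewrite k0 /= addn1.
  by rewrite mul1n -{1}(prednK kp) addn1 eqSS.
rewrite -big_distrr /= sum_pick; have [k0|kp] := posnP k.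
  by rewrite k0.
by rewrite mul1n; have -> : k.-1 < n by lia.
Qed.

Lemma inord_eqm (k : 'I_n.+1) (p : nat) : p < n.+1 -> (k == inord p) = (k == p :> nat).
Proof. by move=> h; rewrite -(inj_eq val_inj) /= inordK. Qed.

Lemma inord_eq (k : 'I_n.+1) (i : 'I_n) (a : bool) :
  (k == inord (i + a) :> 'I_n.+1) = (k == i + a :> nat).
Proof.
have h : i + a < n.+1 by have := ltn_ord i; case: a => /=; lia.
by rewrite -(inj_eq val_inj) /= inordK.
Qed.

Definition nb (b : bool) : nat := b.

Lemma degV (L : {ffun 'I_n * 'I_n -> lc}) (k : 'I_n.+1) (c : 'I_n) :
  #|[set e in hL L | incident e (true, k, c)]| =
   (if k < n then bitl (L (inord k, c)) false false + bitl (L (inord k, c)) false true else 0)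
 + (if 0 < k then bitl (L (inord k.-1, c)) true false + bitl (L (inord k.-1, c)) true true else 0).
Proof.
rewrite card_inc sum4.
transitivity (\sum_(i : 'I_n) \sum_(j : 'I_n) (c == j) *
   ((k == i :> nat) * (bitl (L (i, j)) false false + bitl (L (i, j)) false true) +
    (k == i + 1 :> nat) * (bitl (L (i, j)) true false + bitl (L (i, j)) true true))).
  apply: eq_bigr => i _; apply: eq_bigr => j _.
  rewrite !big_bool /= /incident /= !inE /= !xpair_eqE /=.
  have h0 : i + 0 < n.+1 by have := ltn_ord i; lia.
  have h1 : i + 1 < n.+1 by have := ltn_ord i; lia.
  rewrite !inord_eqm // addn0.
  case: (c == j); case: (k == i :> nat); case: (k == i + 1 :> nat);
  case: (bitl _ true true); case: (bitl _ true false); case: (bitl _ false true); case: (bitl _ false false); by [].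
rewrite exchange_big /=.
rewrite (eq_bigr (fun j => (c == j) * \sum_(i : 'I_n) ((k == i :> nat) * (bitl (L (i, j)) false false + bitl (L (i, j)) false true) +
    (k == i + 1 :> nat) * (bitl (L (i, j)) true false + bitl (L (i, j)) true true)))); last first.
  by move=> j _; rewrite big_distrr.
rewrite pick_ord big_split /= sum_pick sum_pick1.
by case: (k < n); case: (0 < k).
Qed.

Lemma degH (L : {ffun 'I_n * 'I_n -> lc}) (k : 'I_n.+1) (r : 'I_n) :
  #|[set e in hL L | incident e (false, k, r)]| =
   (if k < n then bitl (L (r, inord k)) false false + bitl (L (r, inord k)) true false else 0)
 + (if 0 < k then bitl (L (r, inord k.-1)) false true + bitl (L (r, inord k.-1)) true true else 0).
Proof.
rewrite card_inc sum4.
transitivity (\sum_(i : 'I_n) (r == i) * \sum_(j : 'I_n)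
   ((k == j :> nat) * (bitl (L (i, j)) false false + bitl (L (i, j)) true false) +
    (k == j + 1 :> nat) * (bitl (L (i, j)) false true + bitl (L (i, j)) true true))).
  apply: eq_bigr => i _; rewrite big_distrr /=; apply: eq_bigr => j _.
  rewrite !big_bool /= /incident /= !inE /= !xpair_eqE /=.
  have h0 : j + 0 < n.+1 by have := ltn_ord j; lia.
  have h1 : j + 1 < n.+1 by have := ltn_ord j; lia.
  rewrite !inord_eqm // addn0.
  case: (r == i); case: (k == j :> nat); case: (k == j + 1 :> nat);
  case: (bitl _ true true); case: (bitl _ true false); case: (bitl _ false true); case: (bitl _ false false); by [].
rewrite pick_ord big_split /= sum_pick sum_pick1.
by case: (k < n); case: (0 < k).
Qed.

End Br1.

Arguments wsum : simpl nomatch.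

Fixpoint lsum (K n : nat) (F : seq (seq bool) -> nat) : nat :=
  if K is K'.+1 then wsum n (fun w => lsum K' n (fun ws => F (w :: ws))) else F [::].

Definition shp K n (ws : seq (seq bool)) := (size ws == K) && all (fun w => size w == n) ws.

Lemma eq_lsum K n F G : (forall ws, shp K n ws -> F ws = G ws) -> lsum K n F = lsum K n G.
Proof.
elim: K F G => [|K IH] F G H /=; first by apply: H.
apply: eq_wsum => w hw; apply: IH => ws hws; apply: H.
by move: hws; rewrite /shp /= eqSS hw eqxx.
Qed.

Lemma lsumD K n F G : lsum K n (fun ws => F ws + G ws) = lsum K n F + lsum K n G.
Proof.
elim: K F G => [|K IH] F G //=.
rewrite -wsumD; apply: eq_wsum => w _; exact: IH.
Qed.

Lemma lsumM K n c F : lsum K n (fun ws => c * F ws) = c * lsum K n F.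
Proof.
elim: K F => [|K IH] F //=.
rewrite -wsumM; apply: eq_wsum => w _; exact: IH.
Qed.

Lemma lsum_wsum K n m F :
  lsum K n (fun ws => wsum m (fun w => F ws w)) = wsum m (fun w => lsum K n (fun ws => F ws w)).
Proof.
elim: K F => [|K IH] F //=.
rewrite (eq_wsum (G := fun w => wsum m (fun w' => lsum K n (fun ws => F (w :: ws) w')))); last first.
  by move=> w _; rewrite IH.
by rewrite wsum_swap.
Qed.



Lemma lsum_delta K n ws0 F : shp K n ws0 -> lsum K n (fun ws => (ws == ws0) * F ws) = F ws0.
Proof.
elim: K ws0 F => [|K IH] [|w0 ws0] F //=.
- by move=> _; rewrite mul1n.
- rewrite /shp /= eqSS => /andP [hK /andP [hw hall]].
  transitivity (wsum n (fun w => (w == w0) * F (w :: ws0))).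
    apply: eq_wsum => w hsz.
    rewrite (eq_lsum (G := fun ws => (ws == ws0) * ((w == w0) * F (w :: ws)))); last first.
      by move=> ws _; rewrite eqseq_cons; case: (w == w0); case: (ws == ws0); rewrite /= ?mul0n ?mul1n.
    by rewrite IH // /shp hK.
  by rewrite wsum_delta //; apply/eqP.
Qed.

Lemma lsum_big (I : Type) (r : seq I) K n (F : I -> seq (seq bool) -> nat) :
  lsum K n (fun ws => \sum_(i <- r) F i ws) = \sum_(i <- r) lsum K n (F i).
Proof.
elim: r => [|i r IH].
  rewrite big_nil (eq_lsum (G := fun ws => 0 * 0)); last by move=> ws _; rewrite big_nil.
  by rewrite lsumM mul0n.
rewrite big_cons -IH -lsumD; apply: eq_lsum => ws _; by rewrite big_cons.
Qed.

Definition rowW (w : bool -> bool -> bool -> bool -> nat) m (X F Y : seq bool) : nat :=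
  nth false F 0 * ~~ nth false F m *
  \prod_(j < m) w (nth false X j) (nth false F j) (nth false Y j) (nth false F j.+1).

Lemma wsumS n F : wsum n.+1 F = wsum n (fun Z => F (false :: Z)) + wsum n (fun Z => F (true :: Z)).
Proof. by []. Qed.
Lemma wsum0E F : wsum 0 F = F [::].
Proof. by []. Qed.

Arguments wsum : simpl never.

Lemma RT_rowW_gen w m X Y s t : size X = m -> size Y = m ->
  wsum m.+1 (fun F => (nth false F 0 == s) * (nth false F m == t) *
     \prod_(j < m) w (nth false X j) (nth false F j) (nth false Y j) (nth false F j.+1))
  = RT w s X Y t.
Proof.
elim: m X Y s t => [|m IH] [|x X] [|y Y] s t //.
  move=> _ _; rewrite wsumS !wsum0E /= !big_ord0.
  by case: s; case: t.
move=> [hX] [hY].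
rewrite /= -(IH X Y false t hX hY) -(IH X Y true t hX hY).
rewrite -!wsumM wsumS -!wsumD.
apply: eq_wsum => F _; rewrite !big_ord_recl /=.
by case: s; case: (nth false F 0); rewrite /= ?mul0n ?mul1n ?add0n ?addn0 ?muln0; ring.
Qed.

Lemma RT_rowW w m X Y : size X = m -> size Y = m ->
  wsum m.+1 (fun F => rowW w m X F Y) = RT w true X Y false.
Proof.
move=> hX hY; rewrite -(RT_rowW_gen w true false hX hY); apply: eq_wsum => F _.
by rewrite /rowW; case: (nth false F 0); case: (nth false F m).
Qed.

Lemma chain_rows n K (r : nat -> nat * nat) s X : size X = n ->
  lsum K n (fun xs => lsum K n.+1 (fun fs => (nth [::] (X :: xs) K == nseq n true) *
     \prod_(i < K) rowW (w6 (r (s + i)).1 (r (s + i)).2) n (nth [::] (X :: xs) i) (nth [::] fs i)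
                        (nth [::] (X :: xs) i.+1)))
  = chainT n [seq r i | i <- iota s K] X.
Proof.
elim: K r s X => [|K IH] r s X hX.
  by rewrite /= big_ord0 muln1.
rewrite /= -/(iota s.+1 K) /=.
apply: eq_wsum => Y hY.
transitivity (lsum K n (fun xs => wsum n.+1 (fun F =>
   rowW (w6 (r s).1 (r s).2) n X F Y *
   lsum K n.+1 (fun fs => (nth [::] (Y :: xs) K == nseq n true) *
     \prod_(i < K) rowW (w6 (r (s.+1 + i)).1 (r (s.+1 + i)).2) n (nth [::] (Y :: xs) i) (nth [::] fs i)
                        (nth [::] (Y :: xs) i.+1))))).
  apply: eq_lsum => xs _; apply: eq_wsum => F _.
  rewrite -lsumM; apply: eq_lsum => fs _.
  rewrite big_ord_recl /= addn0.
  rewrite (eq_bigr (fun i : 'I_K => rowW (w6 (r (s.+1 + i)).1 (r (s.+1 + i)).2) n (nth [::] (Y :: xs) i) (nth [::] fs i)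
                        (nth [::] (Y :: xs) i.+1))); last by move=> i _; rewrite /bump /= addnS.
  ring.
rewrite lsum_wsum.
rewrite (eq_wsum (G := fun F => rowW (w6 (r s).1 (r s).2) n X F Y * chainT n [seq r i | i <- iota s.+1 K] Y)); last first.
  by move=> F _; rewrite lsumM IH.
by rewrite wsumMr RT_rowW.
Qed.

Definition at2 (ws : seq (seq bool)) (k c : nat) : bool := nth false (nth [::] ws k) c.

Lemma shp_eq K m xs ys : shp K m xs -> shp K m ys ->
  (forall k c, k < K -> c < m -> at2 xs k c = at2 ys k c) -> xs = ys.
Proof.
move=> /andP [/eqP sx ax] /andP [/eqP sy ay] H.
apply: (eq_from_nth (x0 := [::])); first by rewrite sx sy.
move=> k hk; rewrite sx in hk.
have hx : size (nth [::] xs k) = m by apply/eqP; apply: (allP ax); apply: mem_nth; rewrite sx.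
have hy : size (nth [::] ys k) = m by apply/eqP; apply: (allP ay); apply: mem_nth; rewrite sy.
apply: (eq_from_nth (x0 := false)); first by rewrite hx hy.
move=> c hc; rewrite hx in hc; exact: H.
Qed.

Lemma nseq_ext m (w : seq bool) b : size w = m -> (forall c, c < m -> nth false w c = b) -> w = nseq m b.
Proof.
move=> hs H; apply: (eq_from_nth (x0 := false)); first by rewrite size_nseq.
by move=> c hc; rewrite nth_nseq -hs hc H // -hs.
Qed.

Section Br3.
Variable n' : nat.
Local Notation n := n'.+1.

Definition locb (l : lc) (xt fl yb fr : bool) : bool :=
  [&& bitl l false false + bitl l false true + xt == 1,
      bitl l true false + bitl l true true == yb,
      bitl l false false + bitl l true false == fl &
      bitl l false true + bitl l true true + fr == 1].

Definition bndB (xs fs : seq (seq bool)) : bool :=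
  [&& nth [::] xs 0 == nseq n false, nth [::] xs n == nseq n true &
      [forall r : 'I_n, at2 fs r 0 && ~~ at2 fs r n]].

Definition consB xs fs (L : {ffun 'I_n * 'I_n -> lc}) : bool :=
  bndB xs fs && [forall c : 'I_n * 'I_n,
     locb (L c) (at2 xs c.1 c.2) (at2 fs c.1 c.2) (at2 xs c.1.+1 c.2) (at2 fs c.1 c.2.+1)].

Definition bL (L : {ffun 'I_n * 'I_n -> lc}) (i j : nat) a b := bitl (L (inord i, inord j)) a b.

Definition XL L := mkseq (fun k => mkseq (fun c =>
   (0 < k) && (bL L k.-1 c true false || bL L k.-1 c true true)) n) n.+1.
Definition FL L := mkseq (fun r => mkseq (fun k =>
   (k < n) && (bL L r k false false || bL L r k true false)) n.+1) n.

Definition dV L k c :=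
  (if k < n then bL L k c false false + bL L k c false true else 0) +
  (if 0 < k then bL L k.-1 c true false + bL L k.-1 c true true else 0).
Definition dH L k r :=
  (if k < n then bL L r k false false + bL L r k true false else 0) +
  (if 0 < k then bL L r k.-1 false true + bL L r k.-1 true true else 0).

Definition PMn L := (forall k c, k <= n -> c < n -> dV L k c = 1) /\
                    (forall k r, k <= n -> r < n -> dH L k r = 1).

Lemma inordv (m : nat) (i : 'I_m.+1) : inord (nat_of_ord i) = i.
Proof. by apply: val_inj; rewrite /= inordK. Qed.

Lemma pm_nat L : reflect (PMn L) (perfect_matching (hL L)).
Proof.
apply: (iffP forallP).
- move=> H; split.
  + move=> k c hk hc.
    have := H (true, inord k, inord c); rewrite degV inordK ?ltnS // => /eqP <-.
    by rewrite /dV /bL ?inordv.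
  + move=> k r hk hr.
    have := H (false, inord k, inord r); rewrite degH inordK ?ltnS // => /eqP <-.
    by rewrite /dH /bL ?inordv.
- move=> [HV HH] [[b k] c]; case: b; apply/eqP.
  + rewrite degV; have := HV k c; rewrite /dV /bL inordv; apply; rewrite // -ltnS //.
  + rewrite degH; have := HH k c; rewrite /dH /bL inordv; apply; rewrite // -ltnS //.
Qed.

Lemma consB_facts xs fs L : consB xs fs L ->
  [/\ forall c, c < n -> at2 xs 0 c = false,
      forall c, c < n -> at2 xs n c = true,
      forall r, r < n -> at2 fs r 0 = true,
      forall r, r < n -> at2 fs r n = false &
      forall i j, i < n -> j < n ->
        [/\ bL L i j false false + bL L i j false true + at2 xs i j = 1,
            bL L i j true false + bL L i j true true = at2 xs i.+1 j,
            bL L i j false false + bL L i j true false = at2 fs i j &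
            bL L i j false true + bL L i j true true + at2 fs i j.+1 = 1]].
Proof.
move=> /andP [/and3P [/eqP h0 /eqP hn /forallP hf] /forallP hc].
split.
- by move=> c hc'; rewrite /at2 h0 nth_nseq hc'.
- by move=> c hc'; rewrite /at2 hn nth_nseq hc'.
- by move=> r hr; have := hf (inord r); rewrite inordK // => /andP [].
- by move=> r hr; have := hf (inord r); rewrite inordK // => /andP [_ /negPf].
- move=> i j hi hj; have := hc (inord i, inord j); rewrite /= !inordK // /bL.
  by move=> /and4P [/eqP -> /eqP -> /eqP -> /eqP ->].
Qed.

Lemma at2_XL L k c : k < n.+1 -> c < n ->
  at2 (XL L) k c = (0 < k) && (bL L k.-1 c true false || bL L k.-1 c true true).
Proof. by move=> hk hc; rewrite /at2 /XL nth_mkseq // nth_mkseq. Qed.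

Lemma at2_FL L r k : r < n -> k < n.+1 ->
  at2 (FL L) r k = (k < n) && (bL L r k false false || bL L r k true false).
Proof. by move=> hr hk; rewrite /at2 /FL nth_mkseq // nth_mkseq. Qed.

Lemma shp_XL L : shp n.+1 n (XL L).
Proof.
rewrite /shp /XL size_mkseq eqxx andTb; apply/allP => w /mapP [k _ ->].
by rewrite size_mkseq.
Qed.

Lemma shp_FL L : shp n n.+1 (FL L).
Proof.
rewrite /shp /FL size_mkseq eqxx andTb; apply/allP => w /mapP [k _ ->].
by rewrite size_mkseq.
Qed.

Lemma A1 xs fs L : consB xs fs L -> shp n.+1 n xs -> shp n n.+1 fs ->
  [/\ xs = XL L, fs = FL L & PMn L].
Proof.
move=> hcons sx sf; have [h0 hn f0 fn loc] := consB_facts hcons.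
split.
- apply: (shp_eq sx (shp_XL L)) => k c hk hc; rewrite at2_XL //.
  case: k hk => [|i] hk /=; first exact: h0.
  have [_ l2 _ _] := loc i c hk hc.
  by move: l2; case: (bL L i c true false); case: (bL L i c true true); case: (at2 xs i.+1 c).
- apply: (shp_eq sf (shp_FL L)) => r k hr hk; rewrite at2_FL //.
  case: (ltnP k n) => hkn /=.
  + have [_ _ l3 _] := loc r k hr hkn.
    by move: l3; case: (bL L r k false false); case: (bL L r k true false); case: (at2 fs r k).
  + have e : k = n by lia.
    by rewrite e fn.
- split.
  + move=> k c hk hc; rewrite /dV.
    case: k hk => [|k] hk /=.
      have [l1 _ _ _] := loc 0 c (ltn0Sn _) hc; have := h0 c hc; lia.
    case: ifP => hlt.
      have [l1 _ _ _] := loc k.+1 c hlt hc.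
      have [_ l2 _ _] := loc k c (ltnW hlt) hc; lia.
    have e : k = n' by move: hlt hk; lia.
    subst k; have [_ l2 _ _] := loc n' c (ltnSn _) hc; have := hn c hc; lia.
  + move=> k r hk hr; rewrite /dH.
    case: k hk => [|k] hk /=.
      have [_ _ l3 _] := loc r 0 hr (ltn0Sn _); have := f0 r hr; lia.
    case: ifP => hlt.
      have [_ _ l3 _] := loc r k.+1 hr hlt.
      have [_ _ _ l4] := loc r k hr (ltnW hlt); lia.
    have e : k = n' by move: hlt hk; lia.
    subst k; have [_ _ _ l4] := loc r n' hr (ltnSn _); have := fn r hr; lia.
Qed.

Lemma A2 L : PMn L -> consB (XL L) (FL L) L.
Proof.
move=> [HV HH].
apply/andP; split.
- apply/and3P; split.
  + apply/eqP; apply: nseq_ext; first by rewrite /XL nth_mkseq // size_mkseq.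
    by move=> c hc; have := at2_XL L (ltn0Sn _) hc.
  + apply/eqP; apply: nseq_ext; first by rewrite /XL nth_mkseq // size_mkseq.
    move=> c hc; have := at2_XL L (ltnSn _) hc; rewrite /at2 => -> /=.
    have := HV n c (leqnn _) hc; rewrite /dV ltnn /=; lia.
  + apply/forallP => r; rewrite !at2_FL // ltnn /= andbT.
    have := HH 0 r (leq0n _) (ltn_ord r); rewrite /dH /=; lia.
- apply/forallP => [[i j]] /=.
  have hi := ltn_ord i; have hj := ltn_ord j.
  have ei : inord i = i := inordv i.
  have ej : inord j = j := inordv j.
  have hi1 : i < n.+1 by lia.
  have hi2 : i.+1 < n.+1 by lia.
  have hj1 : j < n.+1 by lia.
  have hj2 : j.+1 < n.+1 by lia.
  rewrite (at2_XL L hi1 hj) (at2_XL L hi2 hj) (at2_FL L hi hj1) (at2_FL L hi hj2) /= /locb.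
  have dv1 := HV i j (ltnW hi) hj; have dv2 := HV i.+1 j hi hj.
  have dh1 := HH j i (ltnW hj) hi; have dh2 := HH j.+1 i hj hi.
  move: dv1 dv2 dh1 dh2; rewrite /dV /dH /bL /= ei ej hi hj /= => dv1 dv2 dh1 dh2.
  apply/and4P; split.
  - move: dv1; case: (0 < i) => /=; lia.
  - move: dv2; case: (i.+1 < n) => /=; lia.
  - move: dh1; case: (0 < j) => /=; lia.
  - move: dh2; case: (j.+1 < n) => /=; lia.
Qed.

Lemma consB_eq xs fs L : shp n.+1 n xs -> shp n n.+1 fs ->
  consB xs fs L = [&& xs == XL L, fs == FL L & perfect_matching (hL L)].
Proof.
move=> sx sf; apply/idP/idP.
- move=> hc; have [-> -> pmn] := A1 hc sx sf.
  by rewrite !eqxx /=; apply/pm_nat.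
- by case/and3P => /eqP -> /eqP -> /pm_nat; exact: A2.
Qed.

Lemma sum_cons L :
  lsum n.+1 n (fun xs => lsum n n.+1 (fun fs => consB xs fs L)) = perfect_matching (hL L).
Proof.
transitivity (lsum n.+1 n (fun xs => (xs == XL L) *
   lsum n n.+1 (fun fs => (fs == FL L) * (perfect_matching (hL L) : nat)))).
  apply: eq_lsum => xs sx; rewrite -lsumM; apply: eq_lsum => fs sf.
  rewrite consB_eq //.
  by case: (xs == _); case: (fs == _); case: (perfect_matching _).
by rewrite lsum_delta ?shp_XL // lsum_delta ?shp_FL.
Qed.

End Br3.

Lemma forall_prod (T : finType) (P : pred T) :
  ([forall c, P c] : nat) = \prod_(c : T) (P c : nat).
Proof.
case: (boolP [forall c, P c]) => h.
  by rewrite big1 // => c _; rewrite (forallP h).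
have [c hc] : exists c, ~~ P c by apply/existsP; rewrite -negb_forall.
by rewrite (bigD1 c) //= (negPf hc) mul0n.
Qed.

Lemma lsumS K n F : lsum K.+1 n F = wsum n (fun w => lsum K n (fun ws => F (w :: ws))).
Proof. by []. Qed.

Section Br4.
Variable n' : nat.
Local Notation n := n'.+1.
Variable W : nat -> nat -> nat.
Variables al be : nat -> nat.
Definition wab i (a b : bool) : nat :=
  match a, b with false, false => al i | true, true => be i | _, _ => 1 end.
Hypothesis hW : forall i j (a b : bool), i < n -> j < n -> W (i.*2 + a) (j.*2 + b) = wab i a b.

Definition hLinv (S : {set ad_edge n}) : {ffun 'I_n * 'I_n -> lc} :=
  [ffun c => ((c.1, c.2, false, false) \in S, (c.1, c.2, false, true) \in S,
              (c.1, c.2, true, false) \in S, (c.1, c.2, true, true) \in S)].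

Lemma hL_bij : bijective (@hL n').
Proof.
exists hLinv.
- move=> L; apply/ffunP => [[i j]]; rewrite ffunE /= !inE /=.
  by case: (L (i, j)) => [[[? ?] ?] ?].
- move=> S; apply/setP => [[[[i j] a] b]]; rewrite !inE ffunE /=.
  by case: a; case: b.
Qed.

Definition wl (c : 'I_n * 'I_n) (l : lc) : nat :=
  \prod_(a : bool) \prod_(b : bool) (if bitl l a b then W (c.1.*2 + a) (c.2.*2 + b) else 1).

Lemma prod_hL L : \prod_(e in hL L) W (e_row e) (e_col e) = \prod_(c : 'I_n * 'I_n) wl c (L c).
Proof.
rewrite big_mkcond /=; symmetry; rewrite /wl pair_bigA pair_bigA /=.
apply: eq_bigr => [[[[i j] a] b]] _.
by rewrite inE.
Qed.

Lemma sum_lc (F : lc -> nat) :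
  \sum_(l : lc) F l = \sum_(a : bool) \sum_(b : bool) \sum_(c : bool) \sum_(d : bool) F (a, b, c, d).
Proof. by symmetry; rewrite !pair_bigA /=; apply: eq_bigr => [[[[a b] c] d]] _. Qed.

Lemma local_sum (c : 'I_n * 'I_n) xt fl yb fr :
  \sum_(l : lc) locb l xt fl yb fr * wl c l = w6 (al c.1) (be c.1) xt fl yb fr.
Proof.
case: c => i j /=.
rewrite sum_lc !big_bool /wl !big_bool /=.
have h00 : W (i.*2 + 0) (j.*2 + 0) = al i := hW false false (ltn_ord i) (ltn_ord j).
have h01 : W (i.*2 + 0) (j.*2 + 1) = 1 := hW false true (ltn_ord i) (ltn_ord j).
have h10 : W (i.*2 + 1) (j.*2 + 0) = 1 := hW true false (ltn_ord i) (ltn_ord j).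
have h11 : W (i.*2 + 1) (j.*2 + 1) = be i := hW true true (ltn_ord i) (ltn_ord j).
rewrite h00 h01 h10 h11.
by case: xt; case: fl; case: yb; case: fr; rewrite /locb /w6 /=; ring.
Qed.

Lemma sumL xs fs :
  \sum_(L : {ffun 'I_n * 'I_n -> lc}) consB xs fs L * \prod_(c : 'I_n * 'I_n) wl c (L c) =
  bndB n' xs fs * \prod_(c : 'I_n * 'I_n)
     w6 (al c.1) (be c.1) (at2 xs c.1 c.2) (at2 fs c.1 c.2) (at2 xs c.1.+1 c.2) (at2 fs c.1 c.2.+1).
Proof.
transitivity (\sum_(L : {ffun 'I_n * 'I_n -> lc}) bndB n' xs fs * \prod_(c : 'I_n * 'I_n)
   (locb (L c) (at2 xs c.1 c.2) (at2 fs c.1 c.2) (at2 xs c.1.+1 c.2) (at2 fs c.1 c.2.+1) * wl c (L c))).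
  apply: eq_bigr => L _; rewrite /consB big_split /= -forall_prod.
  by case: (bndB _ _ _); rewrite /= ?mul1n ?mul0n ?mulnA.
rewrite -big_distrr /=; congr (_ * _).
symmetry.
rewrite (eq_bigr (fun c : 'I_n * 'I_n => \sum_(l : lc) locb l (at2 xs c.1 c.2) (at2 fs c.1 c.2)
     (at2 xs c.1.+1 c.2) (at2 fs c.1 c.2.+1) * wl c l)); last by move=> c _; rewrite local_sum.
by rewrite bigA_distr_bigA.
Qed.

Lemma bnd_rows xs fs :
  bndB n' xs fs * \prod_(c : 'I_n * 'I_n) w6 (al c.1) (be c.1) (at2 xs c.1 c.2) (at2 fs c.1 c.2)
        (at2 xs c.1.+1 c.2) (at2 fs c.1 c.2.+1)
  = (nth [::] xs 0 == nseq n false) * ((nth [::] xs n == nseq n true) *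
     \prod_(i < n) rowW (w6 (al (0 + i)) (be (0 + i))) n (nth [::] xs i) (nth [::] fs i) (nth [::] xs i.+1)).
Proof.
transitivity ((nth [::] xs 0 == nseq n false) * ((nth [::] xs n == nseq n true) *
   \prod_(i < n) (at2 fs i 0 * ~~ at2 fs i n)) * \prod_(i < n) \prod_(j < n)
   w6 (al i) (be i) (at2 xs i j) (at2 fs i j) (at2 xs i.+1 j) (at2 fs i j.+1)).
  rewrite pair_bigA /= /bndB; congr (_ * _).
  rewrite (eq_bigr (fun i : 'I_n => ((at2 fs i 0 && ~~ at2 fs i n) : nat))); last first.
    by move=> i _; case: (at2 fs i 0); case: (at2 fs i n).
  rewrite -forall_prod.
  by case: (_ == _); case: (_ == _); case: [forall _, _]; rewrite /= ?mul0n ?muln0.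
rewrite /rowW.
rewrite (eq_bigr (fun i : 'I_n => (at2 fs i 0 * ~~ at2 fs i n) * \prod_(j < n)
   w6 (al i) (be i) (at2 xs i j) (at2 fs i j) (at2 xs i.+1 j) (at2 fs i j.+1))
   (P := xpredT)
   (F1 := fun i : 'I_n => nth false (nth [::] fs i) 0 * ~~ nth false (nth [::] fs i) n *
      \prod_(j < n) w6 (al (0 + i)) (be (0 + i)) (nth false (nth [::] xs i) j)
        (nth false (nth [::] fs i) j) (nth false (nth [::] xs i.+1) j) (nth false (nth [::] fs i) j.+1)));
  last by move=> i _; rewrite add0n.
rewrite !big_split /=; ring.
Qed.

Theorem bridge : Mw n W = chainT n [seq (al i, be i) | i <- iota 0 n] (nseq n false).
Proof.
rewrite /Mw (reindex (@hL n')) /=; last first.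
  by case: hL_bij => g h1 h2; exists g => x _; [exact: h1 | exact: h2].
transitivity (\sum_(L : {ffun 'I_n * 'I_n -> lc})
   (perfect_matching (hL L) : nat) * \prod_(c : 'I_n * 'I_n) wl c (L c)).
  rewrite big_mkcond /=; apply: eq_bigr => L _; rewrite prod_hL.
  by case: (perfect_matching _); rewrite ?mul1n ?mul0n.
transitivity (\sum_(L : {ffun 'I_n * 'I_n -> lc}) lsum n.+1 n (fun xs =>
   lsum n n.+1 (fun fs => consB xs fs L * \prod_(c : 'I_n * 'I_n) wl c (L c)))).
  apply: eq_bigr => L _; rewrite -sum_cons mulnC -lsumM; apply: eq_lsum => xs _.
  rewrite -lsumM; apply: eq_lsum => fs _; exact: mulnC.
rewrite -lsum_big.
transitivity (lsum n.+1 n (fun xs => lsum n n.+1 (fun fs => bndB n' xs fs *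
   \prod_(c : 'I_n * 'I_n) w6 (al c.1) (be c.1) (at2 xs c.1 c.2) (at2 fs c.1 c.2)
        (at2 xs c.1.+1 c.2) (at2 fs c.1 c.2.+1)))).
  apply: eq_lsum => xs _; rewrite -lsum_big; apply: eq_lsum => fs _; exact: sumL.
rewrite lsumS.
transitivity (wsum n (fun X => (X == nseq n false) * lsum n n (fun xs => lsum n n.+1 (fun fs =>
   (nth [::] (X :: xs) n == nseq n true) *
   \prod_(i < n) rowW (w6 (al (0 + i)) (be (0 + i))) n (nth [::] (X :: xs) i) (nth [::] fs i)
      (nth [::] (X :: xs) i.+1))))).
  apply: eq_wsum => X _; rewrite -lsumM; apply: eq_lsum => xs _; rewrite -lsumM.
  apply: eq_lsum => fs _; exact: bnd_rows.
rewrite wsum_delta ?size_nseq //.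
have H := chain_rows n (fun i => (al i, be i)) 0 (size_nseq n false); simpl in H; exact: H.
Qed.

End Br4.

Lemma wt_bb m s r c : r < m.*2 ->
  wt (bbmat m s) r c = sign_entry (nth sZero s r./2) (odd r) (odd c).
Proof.
move=> hr; rewrite /wt.
have hr' : r %% m.*2 < m.*2 by rewrite modn_small.
have hc' : c %% 2 < 2 by rewrite ltn_mod.
rewrite (insubT (fun x => x < m.*2) hr') (insubT (fun x => x < 2) hc') mxE /=.
by rewrite modn_small // modn2.
Qed.

Lemma half_db i (a : bool) : (i.*2 + a)./2 = i.
Proof. by rewrite addnC half_bit_double. Qed.

Lemma odd_db i (a : bool) : odd (i.*2 + a) = a.
Proof. by rewrite oddD odd_double oddb. Qed.

Lemma code_bb m s : size s = m -> code (bbmat m s) = s.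
Proof.
move=> hs; rewrite /code.
apply: (eq_from_nth (x0 := sZero)); first by rewrite size_map size_iota.
move=> i; rewrite size_map size_iota => hi.
rewrite (nth_map 0) ?size_iota // nth_iota // add0n.
have h0 : i.*2 < m.*2 by rewrite ltn_double.
have h1 : i.*2.+1 < m.*2 by rewrite -doubleS leq_double.
rewrite (wt_bb s 0 h0) (wt_bb s 1 h0) (wt_bb s 0 h1) (wt_bb s 1 h1).
have E1 : (i.*2)./2 = i by rewrite doubleK.
have E2 : (i.*2.+1)./2 = i by apply: (half_bit_double i true).
rewrite E1 E2 /= odd_double /=.
by case: (nth sZero s i).
Qed.

Definition alf (x : bsign) : nat := sign_entry x 0 0.
Definition bef (x : bsign) : nat := sign_entry x 1 1.

Lemma hW_bb m s n' : n'.+1 <= m -> forall i j (a b : bool), i < n'.+1 -> j < n'.+1 ->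
  wt (bbmat m s) (i.*2 + a) (j.*2 + b) =
  wab (fun i => alf (nth sZero s i)) (fun i => bef (nth sZero s i)) i a b.
Proof.
move=> hm i j a b hi hj.
have hr : i.*2 + a < m.*2 by case: a => /=; rewrite -!muln2; lia.
rewrite wt_bb // half_db odd_db odd_db /wab /alf /bef.
by case: a {hr}; case: b; case: (nth sZero s i).
Qed.

Lemma shiftrows_map (al be : nat -> nat) k K :
  shiftrows (al k) [seq (al i, be i) | i <- iota k.+1 K] = [seq (al i, be i.+1) | i <- iota k K].
Proof. by elim: K k => [|K IH] k //=; rewrite IH. Qed.



Lemma prod_code s :
  prodf [seq (alf (nth sZero s i), bef (nth sZero s i)) | i <- iota 0 (size s)] = 2 ^ count is_zero s.
Proof.
have -> : [seq (alf (nth sZero s i), bef (nth sZero s i)) | i <- iota 0 (size s)] =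
          [seq (alf x, bef x) | x <- s].
  by rewrite -[in RHS](mkseq_nth sZero s) /mkseq -map_comp.
elim: s => [|x s IH]; first by rewrite /prodf big_nil.
rewrite /prodf /= big_cons -/(prodf _) IH /= expnD.
by case: x.
Qed.

Lemma nth_shift s i : i < size s ->
  nth sZero (shift_code s) i = mk_sign (has_plus (nth sZero s (i.+1 %% size s))) (has_minus (nth sZero s i)).
Proof. by move=> hi; rewrite /shift_code (nth_map 0) ?size_iota // nth_iota. Qed.

Lemma Mw0 W : Mw 0 W = 1.
Proof.
rewrite /Mw (eq_bigl (fun S => S == set0)); last first.
  move=> S; have -> : S = set0 by apply/setP => [[[[i ?] ?] ?]]; case: i.
  by rewrite eqxx; apply/forallP => [[[b k] [c hc]]].
by rewrite (big_pred1 set0) ?big_set0.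
Qed.

Unset Implicit Arguments.

Theorem lemma3p3 (m : nat) (A : 'M[nat]_(m.*2, 2)) :
  (1 <= m)%N -> is_binary_block A ->
  Mw m (wt A) = (2 ^ count is_zero (code A) * Mw m.-1 (wt (sh A)))%N.
Proof.
case: m A => [|m'] A // _ [s [hs ->]].
rewrite /sh code_bb //.
rewrite (bridge (@hW_bb m'.+1 s m' (leqnn _))).
have E : iota 0 m'.+1 = 0 :: iota 1 m' by [].
rewrite E chain_main (shiftrows_map (fun i => alf (nth sZero s i)) (fun i => bef (nth sZero s i)) 0 m').
have -> : (alf (nth sZero s 0), bef (nth sZero s 0)) :: [seq (alf (nth sZero s i), bef (nth sZero s i)) | i <- iota 1 m'] =
   [seq (alf (nth sZero s i), bef (nth sZero s i)) | i <- iota 0 (size s)] by rewrite hs.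
rewrite prod_code; congr (_ * _).
clear A E; case: m' hs => [|m'] hs.
  by rewrite Mw0.
rewrite (bridge (@hW_bb m'.+2 (shift_code s) m' (ltnW (leqnn _)))).
congr (chainT _ _ _).
apply/eq_in_map => i; rewrite mem_iota add0n => hi.
rewrite nth_shift; last by lia.
rewrite hs modn_small; last by lia.
rewrite /alf /bef.
by case: (nth sZero s i); case: (nth sZero s i.+1).
Qed.
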